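(* Let $G$ be a cycle and $H=(T,L)$ a demand digraph with $T\subseteq V$. If every arc of the directed version of $G$ is contained in at most two routes, then $(G,H)$ has the uniqueness property.
   Context: A supply graph is a finite undirected graph $G=(V,E)$; its directed version (arc set $A$) replaces each edge by two opposite arcs. A demand digraph is a simple digraph $H=(T,L)$ with $T\subseteq V$, arcs called OD-pairs. For $(o,d)\in L$ an $(o,d)$-route is a directed $(o,d)$-path in the directed version of $G$. The population is a bounded real interval $I$ with Lebesgue measure $\lambda$, partitioned into measurable $I_{(o,d)}$. A strategy profile is a measurable $\sigma:I\to\{\text{routes}\}$ with $\sigma(i)$ an $(o,d)$-route for $i\in I_{(o,d)}$; flow $f_a=\lambda\{i:a\in\sigma(i)\}$. Each user $i$ has nonnegative continuous strictly increasing cost functions $c_a^i:\mathbb R_+\to\mathbb R_+$ with $i\mapsto c^i_a(x)$ measurable; route cost is $\sum_{a\in r}c_a^i(f_a)$. An equilibrium is a strategy profile where each user's route has minimal cost among the routes of his OD-pair. $(G,H)$ has the uniqueness property if for every measurable partition $(I_{(o,d)})_{(o,d)\in L}$ of $I$ and every assignment of such cost functions, the flow on each arc is the same in all equilibria. *)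

(* Defs.v *)
From Stdlib Require Import Reals List ClassicalEpsilon.
Open Scope R_scope.

Definition interval_cover_sum (A : R -> Prop) (s : R) : Prop :=
  exists a b : nat -> R,
    (forall k, a k <= b k) /\
    (forall x, A x -> exists k, a k < x < b k) /\
    infinite_sum (fun k => b k - a k) s.

Definition is_glb (E : R -> Prop) (m : R) : Prop :=
  (forall s, E s -> m <= s) /\
  (forall m', (forall s, E s -> m' <= s) -> m' <= m).

(* Lebesgue outer measure (meaningful for bounded sets, which is all we use) *)
Definition lebesgue_outer (A : R -> Prop) : R :=
  epsilon (inhabits 0) (fun m => is_glb (interval_cover_sum A) m).

Definition bounded_set (A : R -> Prop) : Prop :=
  exists M, forall x, A x -> Rabs x <= M.

(* Caratheodory criterion (test sets restricted to bounded sets) *)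
Definition lebesgue_measurable (E : R -> Prop) : Prop :=
  forall A, bounded_set A ->
    lebesgue_outer A =
      lebesgue_outer (fun x => A x /\ E x) + lebesgue_outer (fun x => A x /\ ~ E x).

Definition is_bounded_interval (I : R -> Prop) : Prop :=
  bounded_set I /\ (forall x y z, I x -> I z -> x <= y <= z -> I y).

Definition cycle_arc (n : nat) (a : nat * nat) : Prop :=
  let (u, v) := a in
  (u < n)%nat /\ (v < n)%nat /\ (v = (S u) mod n \/ u = (S v) mod n)%nat.

Fixpoint consecutive_arcs (p : list nat) : list (nat * nat) :=
  match p with
  | x :: ((y :: _) as q) => (x, y) :: consecutive_arcs q
  | _ => nil
  end.

Definition is_route (n : nat) (od : nat * nat) (p : list nat) : Prop :=
  let (o, d) := od in
  hd_error p = Some o /\ last p o = d /\ NoDup p /\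
  Forall (cycle_arc n) (consecutive_arcs p).

(* H = (T, L) simple demand digraph with T a subset of V *)
Definition is_demand (n : nat) (L : list (nat * nat)) : Prop :=
  NoDup L /\
  forall od, In od L -> (fst od < n)%nat /\ (snd od < n)%nat /\ fst od <> snd od.

Definition at_most_two_routes (n : nat) (L : list (nat * nat)) : Prop :=
  forall a, cycle_arc n a ->
  forall od1 od2 od3 r1 r2 r3,
    In od1 L -> In od2 L -> In od3 L ->
    is_route n od1 r1 -> is_route n od2 r2 -> is_route n od3 r3 ->
    In a (consecutive_arcs r1) -> In a (consecutive_arcs r2) ->
    In a (consecutive_arcs r3) ->
    r1 = r2 \/ r1 = r3 \/ r2 = r3.

(* part i = OD-pair of user i; the pieces I_(o,d) are measurable *)
Definition is_measurable_partition (I : R -> Prop) (L : list (nat * nat))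
    (part : R -> nat * nat) : Prop :=
  (forall i, I i -> In (part i) L) /\
  (forall od, In od L -> lebesgue_measurable (fun i => I i /\ part i = od)).

Definition admissible_costs (n : nat) (I : R -> Prop)
    (c : R -> nat * nat -> R -> R) : Prop :=
  forall a, cycle_arc n a ->
    (forall i, I i ->
       (forall x, 0 <= x -> 0 <= c i a x) /\
       (forall x, 0 <= x -> limit1_in (c i a) (fun y => 0 <= y) (c i a x) x) /\
       (forall x y, 0 <= x -> x < y -> c i a x < c i a y)) /\
    (forall x t, 0 <= x -> lebesgue_measurable (fun i => I i /\ c i a x <= t)).

Definition is_strategy_profile (n : nat) (I : R -> Prop) (part : R -> nat * nat)
    (sigma : R -> list nat) : Prop :=
  (forall i, I i -> is_route n (part i) (sigma i)) /\
  (forall r, lebesgue_measurable (fun i => I i /\ sigma i = r)).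

Definition flow (I : R -> Prop) (sigma : R -> list nat) (a : nat * nat) : R :=
  lebesgue_outer (fun i => I i /\ In a (consecutive_arcs (sigma i))).

Definition route_cost (c : R -> nat * nat -> R -> R) (i : R)
    (f : nat * nat -> R) (p : list nat) : R :=
  fold_right Rplus 0 (map (fun a => c i a (f a)) (consecutive_arcs p)).

Definition is_equilibrium (n : nat) (I : R -> Prop) (part : R -> nat * nat)
    (c : R -> nat * nat -> R -> R) (sigma : R -> list nat) : Prop :=
  is_strategy_profile n I part sigma /\
  forall i, I i -> forall r, is_route n (part i) r ->
    route_cost c i (flow I sigma) (sigma i) <= route_cost c i (flow I sigma) r.

Definition uniqueness_property (n : nat) (L : list (nat * nat)) : Prop :=
  forall (I : R -> Prop), is_bounded_interval I ->
  forall part, is_measurable_partition I L part ->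
  forall c, admissible_costs n I c ->
  forall sigma1 sigma2,
    is_equilibrium n I part c sigma1 -> is_equilibrium n I part c sigma2 ->
    forall a, cycle_arc n a -> flow I sigma1 a = flow I sigma2 a.

(* Main.v *)
Require Import Defs.
From Stdlib Require Import Reals List Lia Arith Lra Classical ClassicalEpsilon FunctionalExtensionality PropExtensionality.
Import ListNotations.

Open Scope nat_scope.
Open Scope nat_scope.

Definition F (n v t : nat) : nat := if v + t <? n then v + t else v + t - n.

Ltac unF := unfold F in *; repeat match goal with
  | |- context [?a <? ?b] => destruct (Nat.ltb_spec a b)
  | H : context [?a <? ?b] |- _ => destruct (Nat.ltb_spec a b) end.

Lemma sN_eq n u : u < n -> (S u) mod n = if S u =? n then 0 else S u.
Proof.
  intros H. destruct (Nat.eqb_spec (S u) n).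
  - rewrite e. apply Nat.Div0.mod_same.
  - apply Nat.mod_small. lia.
Qed.

Ltac unS := repeat match goal with
  | H : ?u < ?n |- context [(S ?u) mod ?n] => rewrite (sN_eq n u H)
  | H : ?u < ?n, H2 : context [(S ?u) mod ?n] |- _ => rewrite (sN_eq n u H) in H2
  end;
  repeat match goal with
  | |- context [?a =? ?b] => destruct (Nat.eqb_spec a b)
  | H : context [?a =? ?b] |- _ => destruct (Nat.eqb_spec a b) end.

Lemma F_lt n v t : v < n -> t <= n -> F n v t < n.
Proof. intros. unF; lia. Qed.

Lemma F_0 n v : v < n -> F n v 0 = v.
Proof. intros. unF; lia. Qed.

Lemma F_n n v : v < n -> F n v n = v.
Proof. intros. unF; lia. Qed.

Lemma F_S n v t : v < n -> t < n -> F n v (S t) = (S (F n v t)) mod n.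
Proof.
  intros. assert (F n v t < n) by (apply F_lt; lia).
  rewrite (sN_eq n _ H1). unF; destruct (Nat.eqb_spec (S (v+t)) n); try destruct (Nat.eqb_spec (S (v+t-n)) n); lia.
Qed.

Lemma F_inj n v t t' : v < n -> t < n -> t' < n -> F n v t = F n v t' -> t = t'.
Proof. intros. unF; lia. Qed.

Lemma F_surj n v y : v < n -> y < n -> exists t, t < n /\ F n v t = y.
Proof.
  intros. destruct (le_lt_dec v y).
  - exists (y - v). split. lia. unF; lia.
  - exists (y + n - v). split. lia. unF; lia.
Qed.

Lemma sN_lt n u : 0 < n -> (S u) mod n < n.
Proof. intros. apply Nat.mod_upper_bound. lia. Qed.

Lemma sN_inj n x y : x < n -> y < n -> (S x) mod n = (S y) mod n -> x = y.
Proof. intros. unS; lia. Qed.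

Lemma ssN_neq n x : 3 <= n -> x < n -> (S ((S x) mod n)) mod n <> x.
Proof.
  intros. assert ((S x) mod n < n) by (apply sN_lt; lia).
  rewrite (sN_eq n _ H1). unS; lia.
Qed.

Definition cwr n o L := map (F n o) (seq 0 (S L)).
Definition ccwr n o L := map (fun t => F n o (n - t)) (seq 0 (S L)).
Definition cwa n x : nat * nat := (x, (S x) mod n).
Definition ccwa n x : nat * nat := ((S x) mod n, x).

Lemma arcs_map (g : nat -> nat) L : forall a,
  consecutive_arcs (map g (seq a (S L))) = map (fun t => (g t, g (S t))) (seq a L).
Proof.
  induction L; intros a. reflexivity.
  change (seq a (S (S L))) with (a :: seq (S a) (S L)).
  change (seq a (S L)) with (a :: seq (S a) L).
  rewrite !map_cons. rewrite <- IHL. simpl. reflexivity.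
Qed.

Lemma in_arcs_cw n o L a : o < n -> L < n ->
  (In a (consecutive_arcs (cwr n o L)) <-> exists t, t < L /\ a = cwa n (F n o t)).
Proof.
  intros. unfold cwr. rewrite arcs_map. rewrite in_map_iff. split.
  - intros [t [<- Ht]]. apply in_seq in Ht. exists t. split. lia.
    unfold cwa. rewrite F_S; auto; lia.
  - intros [t [Ht ->]]. exists t. split. unfold cwa. rewrite F_S; auto; lia.
    apply in_seq. lia.
Qed.

Lemma in_arcs_ccw n o L a : o < n -> L <= n ->
  (In a (consecutive_arcs (ccwr n o L)) <-> exists u, n - L <= u < n /\ a = ccwa n (F n o u)).
Proof.
  intros. unfold ccwr. rewrite arcs_map. rewrite in_map_iff. split.
  - intros [t [<- Ht]]. apply in_seq in Ht. exists (n - S t). split. lia.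
    unfold ccwa. replace (n - t) with (S (n - S t)) by lia. rewrite F_S; auto; lia.
  - intros [u [Hu ->]]. exists (n - S u). split.
    unfold ccwa. replace (n - (n - S u)) with (S u) by lia. replace (n - S (n - S u)) with u by lia.
    rewrite F_S; auto; lia.
    apply in_seq. lia.
Qed.

Lemma cwa_ccwa n x y : 3 <= n -> x < n -> y < n -> cwa n x <> ccwa n y.
Proof.
  unfold cwa, ccwa. intros H Hx Hy E. injection E as E1 E2. subst x.
  apply (ssN_neq n y); auto.
Qed.

Open Scope nat_scope.
Open Scope nat_scope.


Lemma cycle_cwa n x : 3 <= n -> x < n -> cycle_arc n (cwa n x).
Proof. intros. unfold cycle_arc, cwa. split; auto. split. apply sN_lt; lia. auto. Qed.

Lemma cycle_ccwa n x : 3 <= n -> x < n -> cycle_arc n (ccwa n x).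
Proof. intros. unfold cycle_arc, ccwa. split. apply sN_lt; lia. split; auto. Qed.

Lemma cycle_arc_cases n a : cycle_arc n a -> exists x, x < n /\ (a = cwa n x \/ a = ccwa n x).
Proof.
  destruct a as [u v]. unfold cycle_arc. intros [Hu [Hv [E|E]]].
  - exists u. split; auto. left. unfold cwa. subst. auto.
  - exists v. split; auto. right. unfold ccwa. subst. auto.
Qed.

Lemma last_map_seq (g : nat -> nat) m z : last (map g (seq 0 (S m))) z = g m.
Proof. rewrite seq_S, map_app. simpl. apply last_last. Qed.

Lemma cwr_S n o m : cwr n o (S m) = cwr n o m ++ [F n o (S m)].
Proof. unfold cwr. rewrite (seq_S (S m)), map_app. reflexivity. Qed.

Lemma ccwr_S n o m : ccwr n o (S m) = ccwr n o m ++ [F n o (n - S m)].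
Proof. unfold ccwr. rewrite (seq_S (S m)), map_app. reflexivity. Qed.

Lemma arcs_snoc (l : list nat) x z : l <> [] ->
  consecutive_arcs (l ++ [x]) = consecutive_arcs l ++ [(last l z, x)].
Proof.
  induction l as [|a l IH]; intros H. congruence.
  destruct l as [|b l]. reflexivity.
  change ((a :: b :: l) ++ [x]) with (a :: ((b :: l) ++ [x])).
  change (consecutive_arcs (a :: ((b :: l) ++ [x]))) with ((a, b) :: consecutive_arcs ((b :: l) ++ [x])).
  rewrite IH by congruence. reflexivity.
Qed.

Lemma cwr_hd n o L : o < n -> hd_error (cwr n o L) = Some o.
Proof. intros. unfold cwr. simpl. rewrite F_0; auto. Qed.
Lemma ccwr_hd n o L : o < n -> hd_error (ccwr n o L) = Some o.
Proof. intros. unfold ccwr. simpl. rewrite Nat.sub_0_r, F_n; auto. Qed.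

Lemma cwr_last n o L z : last (cwr n o L) z = F n o L.
Proof. apply last_map_seq. Qed.
Lemma ccwr_last n o L z : last (ccwr n o L) z = F n o (n - L).
Proof. unfold ccwr. apply (last_map_seq (fun t => F n o (n - t))). Qed.

Lemma cwr_nodup n o L : o < n -> L < n -> NoDup (cwr n o L).
Proof.
  intros. unfold cwr. apply NoDup_map_NoDup_ForallPairs; [|apply seq_NoDup].
  intros x y Hx Hy E. apply in_seq in Hx, Hy. apply F_inj in E; auto; lia.
Qed.

Lemma ccwr_nodup n o L : o < n -> L < n -> NoDup (ccwr n o L).
Proof.
  intros. unfold ccwr. apply NoDup_map_NoDup_ForallPairs; [|apply seq_NoDup].
  intros x y Hx Hy E. apply in_seq in Hx, Hy. unF; lia.
Qed.

Lemma cwr_arcs_ok n o L : 3 <= n -> o < n -> L < n -> Forall (cycle_arc n) (consecutive_arcs (cwr n o L)).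
Proof.
  intros. apply Forall_forall. intros a Ha. apply in_arcs_cw in Ha; auto.
  destruct Ha as [t [Ht ->]]. apply cycle_cwa; auto. apply F_lt; lia.
Qed.

Lemma ccwr_arcs_ok n o L : 3 <= n -> o < n -> L <= n -> Forall (cycle_arc n) (consecutive_arcs (ccwr n o L)).
Proof.
  intros. apply Forall_forall. intros a Ha. apply in_arcs_ccw in Ha; auto.
  destruct Ha as [t [Ht ->]]. apply cycle_ccwa; auto. apply F_lt; lia.
Qed.

Lemma in_cwr n o L y : In y (cwr n o L) <-> exists t, t <= L /\ y = F n o t.
Proof. unfold cwr. rewrite in_map_iff. split; intros [t [H1 H2]]; exists t; rewrite in_seq in *; split; auto; lia. Qed.
Lemma in_ccwr n o L y : In y (ccwr n o L) <-> exists t, t <= L /\ y = F n o (n - t).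
Proof. unfold ccwr. rewrite in_map_iff. split; intros [t [H1 H2]]; exists t; rewrite in_seq in *; split; auto; lia. Qed.

Lemma pred_F n x y : 3 <= n -> x < n -> y < n -> y = (S x) mod n -> x = F n y (n - 1).
Proof. intros. subst y. rewrite sN_eq by auto. destruct (Nat.eqb_spec (S x) n); unF; lia. Qed.

Lemma walk n o : 3 <= n -> o < n -> forall q,
  NoDup (o :: q) -> Forall (cycle_arc n) (consecutive_arcs (o :: q)) ->
  length q < n /\ (o :: q = cwr n o (length q) \/ o :: q = ccwr n o (length q)).
Proof.
  intros Hn Ho q. induction q as [|x q IH] using rev_ind; intros Hnd Hf.
  - split. simpl; lia. left. unfold cwr. simpl. rewrite F_0; auto.
  - rewrite app_comm_cons in Hnd, Hf.
    rewrite (arcs_snoc (o :: q) x o) in Hf by congruence.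
    apply Forall_app in Hf. destruct Hf as [Hf Hl]. apply Forall_inv in Hl. rename Hl into Hxa.
    assert (Hnd' := Hnd). apply NoDup_remove in Hnd'. rewrite app_nil_r in Hnd'. destruct Hnd' as [Hnd1 Hx].
    destruct (IH Hnd1 Hf) as [Hm Hcase]. clear IH.
    rewrite length_app. simpl length. set (m := length q) in *.
    destruct Hxa as [_ [Hxn Hxa]].
    assert (Hbound : length ((o :: q) ++ [x]) <= n).
    { rewrite <- (length_seq n 0).
      apply NoDup_incl_length; auto. intros y Hy. apply in_seq. split. lia.
      apply in_app_or in Hy. destruct Hy as [Hy|[Hy|[]]]; [|lia].
      destruct Hcase as [E|E]; rewrite E in Hy.
      - apply in_cwr in Hy. destruct Hy as [t [Ht ->]]. apply F_lt; lia.
      - apply in_ccwr in Hy. destruct Hy as [t [Ht ->]]. apply F_lt; lia. }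
    rewrite length_app in Hbound. simpl in Hbound. fold m in Hbound.
    split. lia.
    destruct Hcase as [E|E]; rewrite app_comm_cons, E; rewrite E in *; [rewrite cwr_last in Hxa | rewrite ccwr_last in Hxa].
    + destruct Hxa as [Hxa|Hxa].
      * left. replace (m + 1) with (S m) by lia. rewrite cwr_S. f_equal. f_equal.
        rewrite F_S; auto; lia.
      * destruct m as [|m'].
        -- right. unfold cwr, ccwr. simpl. rewrite F_0, Nat.sub_0_r, F_n; auto.
           f_equal. f_equal. apply pred_F; auto. rewrite F_0 in Hxa; auto.
        -- exfalso. apply Hx. apply in_cwr. exists m'. split. lia.
           rewrite F_S in Hxa by lia. apply sN_inj in Hxa; auto. apply F_lt; lia.
    + destruct Hxa as [Hxa|Hxa].
      * destruct m as [|m'].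
        -- left. unfold cwr, ccwr in *. simpl in *. rewrite Nat.sub_0_r, F_n in * by auto.
           rewrite Hxa, F_S, F_0 by lia. reflexivity.
        -- exfalso. apply Hx. apply in_ccwr. exists m'. split. lia.
           rewrite Hxa. replace (n - m') with (S (n - S m')) by lia. rewrite F_S; auto; lia.
      * right. replace (m + 1) with (S m) by lia. rewrite ccwr_S. f_equal. f_equal.
        replace (n - m) with (S (n - S m)) in Hxa by lia. rewrite F_S in Hxa by lia.
        apply sN_inj in Hxa. lia. apply F_lt; lia. auto.
Qed.

Open Scope nat_scope.
Open Scope nat_scope.


Definition Lc n o d := if o <=? d then d - o else d + n - o.

Lemma Lc_props n o d : o < n -> d < n -> o <> d -> 1 <= Lc n o d /\ Lc n o d < n /\ F n o (Lc n o d) = d.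
Proof. intros. unfold Lc. destruct (Nat.leb_spec o d); unF; lia. Qed.

Definition Pr n (k : nat * nat) := cwr n (fst k) (Lc n (fst k) (snd k)).
Definition Qr n (k : nat * nat) := ccwr n (fst k) (n - Lc n (fst k) (snd k)).

Lemma Pr_route n o d : 3 <= n -> o < n -> d < n -> o <> d -> is_route n (o, d) (Pr n (o, d)).
Proof.
  intros. destruct (Lc_props n o d) as [H3 [H4 H5]]; auto. unfold Pr, is_route; lazy beta iota zeta delta [fst snd].
  split. apply cwr_hd; auto. split. rewrite cwr_last; auto. split. apply cwr_nodup; auto.
  apply cwr_arcs_ok; auto.
Qed.

Lemma Qr_route n o d : 3 <= n -> o < n -> d < n -> o <> d -> is_route n (o, d) (Qr n (o, d)).
Proof.
  intros. destruct (Lc_props n o d) as [H3 [H4 H5]]; auto. unfold Qr, is_route; lazy beta iota zeta delta [fst snd].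
  split. apply ccwr_hd; auto. split. rewrite ccwr_last. replace (n - (n - Lc n o d)) with (Lc n o d) by lia. auto.
  split. apply ccwr_nodup; lia. apply ccwr_arcs_ok; lia.
Qed.

Lemma route_char n o d p : 3 <= n -> o < n -> d < n -> o <> d -> is_route n (o, d) p ->
  p = Pr n (o, d) \/ p = Qr n (o, d).
Proof.
  intros Hn Ho Hd Hod [Hh [Hl [Hnd Hf]]].
  destruct (Lc_props n o d) as [H3 [H4 H5]]; auto.
  destruct p as [|o' q]. discriminate. simpl in Hh. injection Hh as Hoo. subst o'.
  destruct (walk n o Hn Ho q Hnd Hf) as [Hq [E|E]]; rewrite E in Hl |- *.
  - rewrite cwr_last in Hl. left. unfold Pr. simpl. f_equal.
    rewrite <- H5 in Hl. apply F_inj in Hl; auto.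
  - rewrite ccwr_last in Hl. right. unfold Qr. simpl. f_equal.
    destruct (length q) as [|m] eqn:Em.
    + rewrite Nat.sub_0_r, F_n in Hl; auto. congruence.
    + rewrite <- H5 in Hl. apply F_inj in Hl; auto; lia.
Qed.

Lemma route_pair_unique n od od' p : is_route n od p -> is_route n od' p -> od = od'.
Proof.
  destruct od as [o d], od' as [o' d']. unfold is_route. intros [H1 [H2 _]] [H1' [H2' _]].
  rewrite H1 in H1'. injection H1' as <-. congruence.
Qed.

Definition uses n y (p : list nat) := In (cwa n y) (consecutive_arcs p) \/ In (ccwa n y) (consecutive_arcs p).
Definition E n o L y := exists t, t < L /\ F n o t = y.

Lemma Pr_no_ccw n o d y : 3 <= n -> o < n -> d < n -> o <> d -> y < n ->
  ~ In (ccwa n y) (consecutive_arcs (Pr n (o, d))).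
Proof.
  intros. destruct (Lc_props n o d) as [H4 [H5 H6]]; auto. unfold Pr; lazy beta iota delta [fst snd].
  rewrite in_arcs_cw; auto. intros [t [Ht Ea]]. symmetry in Ea. revert Ea. apply cwa_ccwa; auto.
  apply F_lt; lia.
Qed.

Lemma Qr_no_cw n o d y : 3 <= n -> o < n -> d < n -> o <> d -> y < n ->
  ~ In (cwa n y) (consecutive_arcs (Qr n (o, d))).
Proof.
  intros. destruct (Lc_props n o d) as [H4 [H5 H6]]; auto. unfold Qr; lazy beta iota delta [fst snd].
  rewrite in_arcs_ccw; try lia. intros [t [Ht Ea]]. revert Ea. apply cwa_ccwa; auto.
  apply F_lt; lia.
Qed.

Lemma Pr_uses n o d y : 3 <= n -> o < n -> d < n -> o <> d -> y < n ->
  (uses n y (Pr n (o, d)) <-> E n o (Lc n o d) y).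
Proof.
  intros. destruct (Lc_props n o d) as [H4 [H5 H6]]; auto. unfold uses. split.
  - intros [Hu|Hu]; [|exfalso; revert Hu; apply Pr_no_ccw; auto].
    unfold Pr in Hu; lazy beta iota delta [fst snd] in Hu. rewrite in_arcs_cw in Hu; auto. destruct Hu as [t [Ht Ea]].
    exists t. split; auto. unfold cwa in Ea. congruence.
  - intros [t [Ht Ey]]. left. unfold Pr; lazy beta iota delta [fst snd]. rewrite in_arcs_cw; auto. exists t. subst; auto.
Qed.

Lemma Qr_uses n o d y : 3 <= n -> o < n -> d < n -> o <> d -> y < n ->
  (uses n y (Qr n (o, d)) <-> ~ E n o (Lc n o d) y).
Proof.
  intros. destruct (Lc_props n o d) as [H4 [H5 H6]]; auto. unfold uses. split.
  - intros [Hu|Hu]; [exfalso; revert Hu; apply Qr_no_cw; auto|].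
    unfold Qr in Hu; lazy beta iota delta [fst snd] in Hu. rewrite in_arcs_ccw in Hu; try lia. destruct Hu as [u [Hu Ea]].
    unfold ccwa in Ea. injection Ea as _ Ey. intros [t [Ht Et]]. rewrite Ey in Et.
    apply F_inj in Et; lia.
  - intros HE. destruct (F_surj n o y) as [u [Hu Eu]]; auto.
    right. unfold Qr; lazy beta iota delta [fst snd]. rewrite in_arcs_ccw; try lia. exists u. split.
    + split; auto. destruct (le_lt_dec (n - (n - Lc n o d)) u); auto. exfalso. apply HE. exists u. split; auto. lia.
    + subst; auto.
Qed.

Lemma interval_diff n o o' L L' : o < n -> o' < n -> 1 <= L < n -> 1 <= L' < n -> (o <> o' \/ L <> L') ->
  exists y, y < n /\ ((E n o L y /\ ~ E n o' L' y) \/ (E n o' L' y /\ ~ E n o L y)).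
Proof.
  intros Ho Ho' HL HL' Hne.
  destruct (Nat.eq_dec o o') as [<-|Hoo].
  - destruct Hne as [Hne|Hne]; [congruence|].
    destruct (lt_dec L L').
    + exists (F n o L). split. apply F_lt; lia. right. split. exists L; auto.
      intros [t [Ht Et]]. apply F_inj in Et; lia.
    + exists (F n o L'). split. apply F_lt; lia. left. split. exists L'; split; auto; lia.
      intros [t [Ht Et]]. apply F_inj in Et; lia.
  - assert (Eo : E n o L o) by (exists 0; split; [lia| apply F_0; auto]).
    destruct (Classical_Prop.classic (E n o' L' o)) as [Hc|Hc].
    + destruct Hc as [t1 [Ht1 Et1]].
      assert (t1 <> 0) by (intro; subst; rewrite F_0 in Hoo; auto).
      exists (F n o' (t1 - 1)). split. apply F_lt; lia. right. split.
      * exists (t1 - 1). split; auto; lia.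
      * intros [t [Ht Et]]. assert (Hp : F n o' (t1 - 1) = F n o (n - 1)) by (subst o; unF; lia).
        rewrite Hp in Et. apply F_inj in Et; lia.
    + exists o. split; auto.
Qed.

Lemma E_dec_excl n o L y : o < n -> y < n -> E n o L y \/ ~ E n o L y.
Proof. intros. apply Classical_Prop.classic. Qed.

Open Scope nat_scope.
Open Scope nat_scope.

Definition Routes n (L : list (nat * nat)) := flat_map (fun k => [Pr n k; Qr n k]) L.

Lemma in_Routes n L r : In r (Routes n L) <-> exists k, In k L /\ (r = Pr n k \/ r = Qr n k).
Proof.
  unfold Routes. rewrite in_flat_map. split.
  - intros [k [Hk Hr]]. exists k. split; auto. simpl in Hr. intuition.
  - intros [k [Hk Hr]]. exists k. split; auto. simpl. intuition.
Qed.

Lemma dem_k n L k : is_demand n L -> In k L -> fst k < n /\ snd k < n /\ fst k <> snd k.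
Proof. intros [_ H] Hk. apply H; auto. Qed.

Lemma PQ_route n L k : 3 <= n -> is_demand n L -> In k L -> is_route n k (Pr n k) /\ is_route n k (Qr n k).
Proof.
  intros Hn Hd Hk. destruct (dem_k n L k Hd Hk) as [H1 [H2 H3]]. destruct k as [o d]. simpl in *.
  split. apply Pr_route; auto. apply Qr_route; auto.
Qed.

Lemma Routes_route n L r : 3 <= n -> is_demand n L -> In r (Routes n L) -> exists k, In k L /\ is_route n k r.
Proof.
  intros Hn Hd Hr. apply in_Routes in Hr. destruct Hr as [k [Hk Hr]]. exists k. split; auto.
  destruct (PQ_route n L k Hn Hd Hk). destruct Hr; subst; auto.
Qed.

Lemma route_in_Routes n L k p : 3 <= n -> is_demand n L -> In k L -> is_route n k p -> In p (Routes n L).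
Proof.
  intros Hn Hd Hk Hp. apply in_Routes. exists k. split; auto.
  destruct (dem_k n L k Hd Hk) as [H1 [H2 H3]]. destruct k as [o d]. simpl in *.
  apply route_char; auto.
Qed.

Lemma Routes_arc n L r b : 3 <= n -> is_demand n L -> In r (Routes n L) -> In b (consecutive_arcs r) -> cycle_arc n b.
Proof.
  intros Hn Hd Hr Hb. destruct (Routes_route n L r Hn Hd Hr) as [[o d] [_ Hk]].
  destruct Hk as [_ [_ [_ Hf]]]. rewrite Forall_forall in Hf. auto.
Qed.

Lemma orient n L r y : 3 <= n -> is_demand n L -> In r (Routes n L) -> y < n ->
  ~ (In (cwa n y) (consecutive_arcs r) /\ In (ccwa n y) (consecutive_arcs r)).
Proof.
  intros Hn Hd Hr Hy [H1 H2]. apply in_Routes in Hr. destruct Hr as [k [Hk Hr]].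
  destruct (dem_k n L k Hd Hk) as [Ho [Hd' Hod]]. destruct k as [o d]. simpl in *.
  destruct Hr; subst.
  - revert H2. apply Pr_no_ccw; auto.
  - revert H1. apply Qr_no_cw; auto.
Qed.

Lemma exact_one n L k y : 3 <= n -> is_demand n L -> In k L -> y < n ->
  (uses n y (Pr n k) <-> ~ uses n y (Qr n k)).
Proof.
  intros Hn Hd Hk Hy. destruct (dem_k n L k Hd Hk) as [Ho [Hd' Hod]]. destruct k as [o d]. simpl in *.
  rewrite Pr_uses, Qr_uses; auto. split; intros H; [tauto|]. apply NNPP; auto.
Qed.

Lemma same_pair n L k j r : 3 <= n -> is_demand n L -> In k L -> In j L ->
  (r = Pr n k \/ r = Qr n k) -> (r = Pr n j \/ r = Qr n j) -> k = j.
Proof.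
  intros Hn Hd Hk Hj Hrk Hrj.
  destruct (PQ_route n L k Hn Hd Hk), (PQ_route n L j Hn Hd Hj).
  apply (route_pair_unique n k j r); [destruct Hrk | destruct Hrj]; subst; auto.
Qed.

Lemma arc_cases n b : cycle_arc n b -> exists x, x < n /\ (b = cwa n x \/ b = ccwa n x).
Proof. apply cycle_arc_cases. Qed.

Lemma PQ_noshare n L k b : 3 <= n -> is_demand n L -> In k L ->
  In b (consecutive_arcs (Pr n k)) -> In b (consecutive_arcs (Qr n k)) -> False.
Proof.
  intros Hn Hd Hk H1 H2. destruct (dem_k n L k Hd Hk) as [Ho [Hd' Hod]].
  assert (cycle_arc n b).
  { apply (Routes_arc n L (Pr n k)); auto. apply in_Routes. eauto. }
  destruct (cycle_arc_cases n b H) as [x [Hx [->| ->]]]; destruct k as [o d]; simpl in *.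
  - revert H2. apply Qr_no_cw; auto.
  - revert H1. apply Pr_no_ccw; auto.
Qed.

Lemma PQ_neq n L k : 3 <= n -> is_demand n L -> In k L -> Pr n k <> Qr n k.
Proof.
  intros Hn Hd Hk E. destruct (dem_k n L k Hd Hk) as [Ho [Hd' Hod]].
  destruct (Lc_props n (fst k) (snd k)) as [H1 [H2 H3]]; auto.
  apply (PQ_noshare n L k (cwa n (fst k))); auto.
  - unfold Pr. rewrite in_arcs_cw; auto. exists 0. split. lia. rewrite F_0; auto.
  - rewrite <- E. unfold Pr. rewrite in_arcs_cw; auto. exists 0. split. lia. rewrite F_0; auto.
Qed.

Lemma route_has_arc n L k r : 3 <= n -> is_demand n L -> In k L -> (r = Pr n k \/ r = Qr n k) ->
  exists b, In b (consecutive_arcs r).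
Proof.
  intros Hn Hd Hk Hr. destruct (dem_k n L k Hd Hk) as [Ho [Hd' Hod]].
  assert (Hroute : is_route n k r) by (destruct (PQ_route n L k Hn Hd Hk); destruct Hr; subst; auto).
  destruct k as [o d]. destruct Hroute as [Hh [Hl _]]. simpl in *.
  destruct r as [|x [|y q]]; simpl in *; try discriminate.
  - injection Hh as ->. congruence.
  - exists (x, y). auto.
Qed.

Lemma three_routes n L b r1 r2 r3 : 3 <= n -> is_demand n L -> at_most_two_routes n L -> cycle_arc n b ->
  In r1 (Routes n L) -> In r2 (Routes n L) -> In r3 (Routes n L) ->
  In b (consecutive_arcs r1) -> In b (consecutive_arcs r2) -> In b (consecutive_arcs r3) ->
  r1 <> r2 -> r1 <> r3 -> r2 <> r3 -> False.
Proof.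
  intros Hn Hd Htwo Hb H1 H2 H3 B1 B2 B3 N12 N13 N23.
  destruct (Routes_route n L r1 Hn Hd H1) as [k1 [K1 R1]].
  destruct (Routes_route n L r2 Hn Hd H2) as [k2 [K2 R2]].
  destruct (Routes_route n L r3 Hn Hd H3) as [k3 [K3 R3]].
  destruct (Htwo b Hb k1 k2 k3 r1 r2 r3) as [|[|]]; auto.
Qed.

Lemma share_diff n L k j r s b : 3 <= n -> is_demand n L -> In k L -> In j L ->
  (r = Pr n k \/ r = Qr n k) -> (s = Pr n j \/ s = Qr n j) -> r <> s ->
  In b (consecutive_arcs r) -> In b (consecutive_arcs s) ->
  k <> j /\ exists y, y < n /\ ((uses n y r /\ ~ uses n y s) \/ (uses n y s /\ ~ uses n y r)).
Proof.
  intros Hn Hd Hk Hj Hr Hs Hrs Hbr Hbs.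
  assert (Hkj : k <> j).
  { intros <-. destruct Hr, Hs; subst; try congruence.
    - apply (PQ_noshare n L k b); auto.
    - apply (PQ_noshare n L k b); auto. }
  split; auto.
  destruct (dem_k n L k Hd Hk) as [Ho [Hd1 Hod]]. destruct (dem_k n L j Hd Hj) as [Ho' [Hd1' Hod']].
  destruct k as [o d], j as [o' d']. simpl in *.
  destruct (Lc_props n o d) as [L1 [L2 L3]]; auto. destruct (Lc_props n o' d') as [L1' [L2' L3']]; auto.
  assert (Hne : o <> o' \/ Lc n o d <> Lc n o' d').
  { destruct (Nat.eq_dec o o'); [|auto]. subst o'. right. intros E. apply Hkj. rewrite <- L3, <- L3', E. auto. }
  assert (Hb : cycle_arc n b).
  { apply (Routes_arc n L r); auto. apply in_Routes. eauto. }
  destruct (interval_diff n o o' (Lc n o d) (Lc n o' d')) as [y [Hy Hxor]]; auto; try lia.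
  exists y. split; auto.
  destruct (cycle_arc_cases n b Hb) as [x [Hx Hbx]].
  destruct Hr as [->| ->], Hs as [->| ->].
  - rewrite !Pr_uses; auto.
  - exfalso. destruct Hbx as [->| ->]. revert Hbs; apply Qr_no_cw; auto. revert Hbr; apply Pr_no_ccw; auto.
  - exfalso. destruct Hbx as [->| ->]. revert Hbr; apply Qr_no_cw; auto. revert Hbs; apply Pr_no_ccw; auto.
  - rewrite !Qr_uses; auto. tauto.
Qed.

Open Scope R_scope.

Definition HZ_prop n L (dd : list nat -> R) (delta : R) :=
  forall r b, In r (Routes n L) -> Rabs (dd r) = delta -> In b (consecutive_arcs r) ->
    exists s, In s (Routes n L) /\ In b (consecutive_arcs s) /\ dd s = - dd r.

Definition Mp n L (dd : list nat -> R) delta k := In k L /\ Rabs (dd (Pr n k)) = delta.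

Lemma Mp_route n L dd delta k r : (forall k, In k L -> dd (Qr n k) = - dd (Pr n k)) ->
  Mp n L dd delta k -> (r = Pr n k \/ r = Qr n k) -> Rabs (dd r) = delta.
Proof.
  intros Hp [Hk HM] [->| ->]; auto. rewrite Hp, Rabs_Ropp; auto.
Qed.

Lemma route_Mp n L dd delta k r : (forall k, In k L -> dd (Qr n k) = - dd (Pr n k)) -> In k L ->
  (r = Pr n k \/ r = Qr n k) -> Rabs (dd r) = delta -> Mp n L dd delta k.
Proof.
  intros Hp Hk [->| ->] H; split; auto. rewrite Hp, Rabs_Ropp in H; auto.
Qed.

Lemma uses_arc n y u : uses n y u -> In (cwa n y) (consecutive_arcs u) \/ In (ccwa n y) (consecutive_arcs u).
Proof. auto. Qed.

Lemma three_pairs n L dd delta k j r s y : (3 <= n)%nat -> is_demand n L -> (delta > 0)%R ->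
  HZ_prop n L dd delta -> (forall k, In k L -> dd (Qr n k) = - dd (Pr n k)) ->
  In k L -> In j L -> k <> j -> (r = Pr n k \/ r = Qr n k) -> (s = Pr n j \/ s = Qr n j) ->
  Rabs (dd r) = delta -> dd s = - dd r -> (y < n)%nat -> uses n y r -> ~ uses n y s ->
  exists k1, Mp n L dd delta k1 /\ k1 <> k /\ k1 <> j.
Proof.
  intros Hn Hd Hdel HZ Hp Hk Hj Hkj Hr Hs Hdr Hds Hy Ur Us.
  assert (HrR : In r (Routes n L)) by (apply in_Routes; eauto).
  destruct (uses_arc n y r Ur) as [Hb|Hb];
  [set (b := cwa n y) in * | set (b := ccwa n y) in *];
  destruct (HZ r b HrR Hdr Hb) as [m1 [Hm1 [Hbm1 Hdm1]]];
  destruct (proj1 (in_Routes n L m1) Hm1) as [k1 [Hk1 Hmk1]];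
  exists k1; (split; [apply (route_Mp n L dd delta k1 m1); auto; rewrite Hdm1, Rabs_Ropp; auto|]);
  (assert (Hum1 : uses n y m1) by (unfold uses; unfold b in Hbm1; auto));
  (split; intros ->;
   [
     destruct Hr as [Er|Er], Hmk1 as [Em|Em]; subst r m1;
     try (assert (dd (Pr n k) = 0)%R by lra; rewrite H in Hdr; rewrite Rabs_R0 in Hdr; lra);
     try (assert (dd (Qr n k) = 0)%R by lra; rewrite H in Hdr; rewrite Rabs_R0 in Hdr; lra);
     [ apply (exact_one n L k y) in Ur; auto | apply (exact_one n L k y) in Hum1; auto ]
   |
     destruct Hs as [Es|Es], Hmk1 as [Em|Em]; subst s m1; try contradiction;
     [ rewrite Hp in Hdm1 by auto | rewrite Hp in Hds by auto ];
     assert (dd r = 0)%R by lra; rewrite H in Hdr; rewrite Rabs_R0 in Hdr; lra ]).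
Qed.

Lemma pair_route_using n L k y : (3 <= n)%nat -> is_demand n L -> In k L -> (y < n)%nat ->
  exists u, (u = Pr n k \/ u = Qr n k) /\ uses n y u.
Proof.
  intros Hn Hd Hk Hy. destruct (classic (uses n y (Pr n k))) as [H|H].
  - exists (Pr n k). auto.
  - exists (Qr n k). split; auto. apply NNPP. intros H'. apply H. apply (exact_one n L k y); auto.
Qed.

Lemma final_cover n L dd delta k1 k2 k3 : (3 <= n)%nat -> is_demand n L -> at_most_two_routes n L ->
  (forall k, In k L -> dd (Qr n k) = - dd (Pr n k)) ->
  Mp n L dd delta k1 -> Mp n L dd delta k2 -> Mp n L dd delta k3 ->
  k1 <> k2 -> k1 <> k3 -> k2 <> k3 ->
  forall a, cycle_arc n a -> exists r, In r (Routes n L) /\ Rabs (dd r) = delta /\ In a (consecutive_arcs r).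
Proof.
  intros Hn Hd Htwo Hp M1 M2 M3 N12 N13 N23 a Ha.
  destruct (cycle_arc_cases n a Ha) as [x [Hx Hax]].
  destruct (pair_route_using n L k1 x Hn Hd (proj1 M1) Hx) as [u1 [Hu1 U1]].
  destruct (pair_route_using n L k2 x Hn Hd (proj1 M2) Hx) as [u2 [Hu2 U2]].
  destruct (pair_route_using n L k3 x Hn Hd (proj1 M3) Hx) as [u3 [Hu3 U3]].
  assert (R1 : In u1 (Routes n L)) by (apply in_Routes; exists k1; split; [apply M1|auto]).
  assert (R2 : In u2 (Routes n L)) by (apply in_Routes; exists k2; split; [apply M2|auto]).
  assert (R3 : In u3 (Routes n L)) by (apply in_Routes; exists k3; split; [apply M3|auto]).
  assert (D1 := Mp_route n L dd delta k1 u1 Hp M1 Hu1).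
  assert (D2 := Mp_route n L dd delta k2 u2 Hp M2 Hu2).
  assert (D3 := Mp_route n L dd delta k3 u3 Hp M3 Hu3).
  assert (N'12 : u1 <> u2) by (intros <-; apply N12; apply (same_pair n L k1 k2 u1); auto; apply M1 || apply M2).
  assert (N'13 : u1 <> u3) by (intros <-; apply N13; apply (same_pair n L k1 k3 u1); auto; apply M1 || apply M3).
  assert (N'23 : u2 <> u3) by (intros <-; apply N23; apply (same_pair n L k2 k3 u2); auto; apply M2 || apply M3).
  destruct (classic (In a (consecutive_arcs u1))) as [A1|A1]; [exists u1; auto|].
  destruct (classic (In a (consecutive_arcs u2))) as [A2|A2]; [exists u2; auto|].
  destruct (classic (In a (consecutive_arcs u3))) as [A3|A3]; [exists u3; auto|].
  exfalso.
  destruct Hax as [-> | ->].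
  - apply (three_routes n L (ccwa n x) u1 u2 u3); auto.
    + apply cycle_ccwa; auto.
    + destruct U1 as [U|U]; [contradiction|exact U].
    + destruct U2 as [U|U]; [contradiction|exact U].
    + destruct U3 as [U|U]; [contradiction|exact U].
  - apply (three_routes n L (cwa n x) u1 u2 u3); auto.
    + apply cycle_cwa; auto.
    + destruct U1 as [U|U]; [exact U|contradiction].
    + destruct U2 as [U|U]; [exact U|contradiction].
    + destruct U3 as [U|U]; [exact U|contradiction].
Qed.

Open Scope R_scope.
Lemma cover_all n L dd delta : (3 <= n)%nat -> is_demand n L -> at_most_two_routes n L -> (delta > 0)%R ->
  HZ_prop n L dd delta -> (forall k, In k L -> dd (Qr n k) = - dd (Pr n k)) ->
  forall r0, In r0 (Routes n L) -> Rabs (dd r0) = delta ->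
  forall a, cycle_arc n a -> exists r, In r (Routes n L) /\ Rabs (dd r) = delta /\ In a (consecutive_arcs r).
Proof.
  intros Hn Hd Htwo Hdel HZ Hp r0 Hr0 Hd0 a Ha.
  destruct (proj1 (in_Routes n L r0) Hr0) as [k [Hk Hrk]].
  destruct (route_has_arc n L k r0 Hn Hd Hk Hrk) as [a0 Ha0].
  destruct (HZ r0 a0 Hr0 Hd0 Ha0) as [s0 [Hs0 [Has0 Hds0]]].
  destruct (proj1 (in_Routes n L s0) Hs0) as [j [Hj Hsj]].
  assert (Hne : r0 <> s0).
  { intros <-. assert (dd r0 = 0) by lra. rewrite H, Rabs_R0 in Hd0. lra. }
  destruct (share_diff n L k j r0 s0 a0 Hn Hd Hk Hj Hrk Hsj Hne Ha0 Has0) as [Hkj [y [Hy Hx]]].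
  assert (Hds0' : Rabs (dd s0) = delta) by (rewrite Hds0, Rabs_Ropp; auto).
  assert (Mk : Mp n L dd delta k) by (apply (route_Mp n L dd delta k r0); auto).
  assert (Mj : Mp n L dd delta j) by (apply (route_Mp n L dd delta j s0); auto).
  destruct Hx as [[U1 U2]|[U1 U2]].
  - destruct (three_pairs n L dd delta k j r0 s0 y) as [k1 [M1 [N1 N2]]]; auto.
    apply (final_cover n L dd delta k j k1); auto.
  - destruct (three_pairs n L dd delta j k s0 r0 y) as [k1 [M1 [N1 N2]]]; auto.
    rewrite Hds0. lra.
    apply (final_cover n L dd delta k j k1); auto.
Qed.

Open Scope R_scope.
Open Scope R_scope.

Lemma outer_ext (A B : R -> Prop) : (forall x, A x <-> B x) -> lebesgue_outer A = lebesgue_outer B.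
Proof.
  intros H. f_equal. apply functional_extensionality. intros x. apply propositional_extensionality. auto.
Qed.

Lemma inf_sum_nonneg f s : infinite_sum f s -> (forall k, 0 <= f k) -> 0 <= s.
Proof.
  intros Hs Hf. destruct (Rle_or_lt 0 s) as [|Hlt]; auto.
  destruct (Hs (- s)) as [N HN]. lra.
  specialize (HN N (le_n N)). unfold R_dist in HN.
  assert (0 <= sum_f_R0 f N) by (apply cond_pos_sum; auto).
  pose proof (Rle_abs (sum_f_R0 f N - s)). lra.
Qed.

Lemma inf_sum_single f c : f O = c -> (forall k, f (S k) = 0) -> infinite_sum f c.
Proof.
  intros H0 HS eps He. exists O. intros m _.
  assert (sum_f_R0 f m = c).
  { induction m. simpl. auto. simpl. rewrite IHm, HS. lra. }
  rewrite H. unfold R_dist. rewrite Rminus_diag, Rabs_R0. auto.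
Qed.

Lemma cover_nonneg A s : interval_cover_sum A s -> 0 <= s.
Proof.
  intros [a [b [Hab [_ Hs]]]]. apply (inf_sum_nonneg _ _ Hs). intros k. specialize (Hab k). lra.
Qed.

Lemma glb_exists A : bounded_set A -> exists m, is_glb (interval_cover_sum A) m.
Proof.
  intros [M HM].
  assert (Hne : interval_cover_sum A (2 * (Rabs M + 1))).
  { exists (fun k => match k with O => - (Rabs M + 1) | _ => 0 end).
    exists (fun k => match k with O => Rabs M + 1 | _ => 0 end).
    split. intros [|k]; pose proof (Rabs_pos M); lra.
    split. intros x Hx. exists O. specialize (HM x Hx). pose proof (Rle_abs M).
      pose proof (Rle_abs x). pose proof (Rle_abs (- x)). rewrite Rabs_Ropp in *. lra.
    apply inf_sum_single. lra. intros; lra. }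
  set (E := fun x => interval_cover_sum A (- x)).
  destruct (completeness E) as [m [Hub Hlub]].
  - exists 0. intros x Hx. apply cover_nonneg in Hx. lra.
  - exists (- (2 * (Rabs M + 1))). unfold E. rewrite Ropp_involutive. auto.
  - exists (- m). split.
    + intros s Hs. assert (E (- s)) by (unfold E; rewrite Ropp_involutive; auto).
      specialize (Hub _ H). lra.
    + intros m' Hm'. assert (m <= - m'). { apply Hlub. intros x Hx. specialize (Hm' _ Hx). lra. }
      lra.
Qed.

Lemma outer_glb A : bounded_set A -> is_glb (interval_cover_sum A) (lebesgue_outer A).
Proof.
  intros H. unfold lebesgue_outer. apply epsilon_spec. apply glb_exists; auto.
Qed.

Lemma outer_nonneg A : bounded_set A -> 0 <= lebesgue_outer A.
Proof.
  intros H. destruct (outer_glb A H) as [_ H2]. apply H2. apply cover_nonneg.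
Qed.

Lemma outer_empty A : (forall x, ~ A x) -> lebesgue_outer A = 0.
Proof.
  intros H. assert (Hb : bounded_set A) by (exists 0; intros x Hx; exfalso; exact (H x Hx)).
  apply Rle_antisym; [|apply outer_nonneg; auto].
  destruct (outer_glb A Hb) as [H1 _]. apply H1.
  exists (fun _ => 0), (fun _ => 0). split. intros; lra. split. intros x Hx; exfalso; exact (H x Hx).
  apply inf_sum_single; intros; lra.
Qed.

Lemma bounded_sub (A B : R -> Prop) : (forall x, A x -> B x) -> bounded_set B -> bounded_set A.
Proof. intros H [M HM]. exists M. auto. Qed.

Lemma outer_split A E : lebesgue_measurable E -> bounded_set A ->
  lebesgue_outer A = lebesgue_outer (fun x => A x /\ E x) + lebesgue_outer (fun x => A x /\ ~ E x).
Proof. intros H Hb. apply H; auto. Qed.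

Lemma outer_mono E B : lebesgue_measurable E -> bounded_set B -> (forall x, E x -> B x) ->
  lebesgue_outer E <= lebesgue_outer B.
Proof.
  intros HE Hb Hsub. rewrite (outer_split B E HE Hb).
  rewrite (outer_ext (fun x => B x /\ E x) E) by (intros x; split; [tauto| auto]).
  pose proof (outer_nonneg (fun x => B x /\ ~ E x)). 
  assert (bounded_set (fun x => B x /\ ~ E x)) by (apply (bounded_sub _ B); tauto). 
  specialize (H H0). lra.
Qed.

Open Scope R_scope.
Open Scope R_scope.

Definition mu (I : R -> Prop) (sg : R -> list nat) r := lebesgue_outer (fun i => I i /\ sg i = r).
Definition sumR {A} (l : list A) (f : A -> R) := fold_right Rplus 0 (map f l).

Definition arc_dec : forall x y : nat * nat, {x = y} + {x <> y}.
Proof. decide equality; apply Nat.eq_dec. Defined.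

Definition Ra n L a := nodup (list_eq_dec Nat.eq_dec)
  (filter (fun r => if in_dec arc_dec a (consecutive_arcs r) then true else false) (Routes n L)).

Lemma in_Ra n L a r : In r (Ra n L a) <-> In r (Routes n L) /\ In a (consecutive_arcs r).
Proof.
  unfold Ra. rewrite nodup_In, filter_In. destruct (in_dec arc_dec a (consecutive_arcs r)); intuition discriminate.
Qed.

Lemma Ra_nodup n L a : NoDup (Ra n L a).
Proof. apply NoDup_nodup. Qed.

Lemma Ra_len n L a : (3 <= n)%nat -> is_demand n L -> at_most_two_routes n L -> cycle_arc n a ->
  (length (Ra n L a) <= 2)%nat.
Proof.
  intros Hn Hd Htwo Ha. pose proof (Ra_nodup n L a) as Hnd.
  assert (Hin := fun r => proj1 (in_Ra n L a r)).
  destruct (Ra n L a) as [|r1 [|r2 [|r3 l]]]; simpl; try lia. exfalso.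
  inversion Hnd as [|? ? N1 Hnd1]. inversion Hnd1 as [|? ? N2 _].
  destruct (Hin r1) as [A1 B1]; [simpl; auto|].
  destruct (Hin r2) as [A2 B2]; [simpl; auto|].
  destruct (Hin r3) as [A3 B3]; [simpl; auto|].
  apply (three_routes n L a r1 r2 r3); auto; intros E; subst; simpl in *; tauto.
Qed.


Lemma sumR_sub {A} (l : list A) f g : sumR l f - sumR l g = sumR l (fun x => f x - g x).
Proof. induction l; unfold sumR in *; simpl; [lra|]. rewrite <- IHl. lra. Qed.

Lemma sumR_nonneg {A} (l : list A) f : (forall x, In x l -> 0 <= f x) -> 0 <= sumR l f.
Proof.
  induction l; intros H; unfold sumR in *; simpl; [lra|].
  pose proof (H a (or_introl eq_refl)). assert (0 <= fold_right Rplus 0 (map f l)) by (apply IHl; intros; apply H; simpl; auto). lra.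
Qed.

Lemma sumR_zero {A} (l : list A) f : (forall x, In x l -> 0 <= f x) -> sumR l f <= 0 -> forall x, In x l -> f x = 0.
Proof.
  induction l; intros H Hs x Hx; [destruct Hx|].
  assert (H0 : 0 <= f a) by (apply H; simpl; auto).
  assert (H1 : 0 <= sumR l f) by (apply sumR_nonneg; intros; apply H; simpl; auto).
  unfold sumR in Hs; simpl in Hs. fold (sumR l f) in Hs.
  destruct Hx as [<-|Hx]; [lra|]. apply IHl; auto. intros; apply H; simpl; auto. lra.
Qed.

Lemma sumR_opp {A} (l : list A) f : sumR l (fun x => - f x) = - sumR l f.
Proof. induction l; unfold sumR in *; simpl; [lra|]. rewrite IHl. lra. Qed.

Lemma outer_add_list (I : R -> Prop) (sg : R -> list nat) : bounded_set I ->
  (forall r, lebesgue_measurable (fun i => I i /\ sg i = r)) ->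
  forall l, NoDup l -> lebesgue_outer (fun i => I i /\ In (sg i) l) = sumR l (mu I sg).
Proof.
  intros Hb Hm l. induction l as [|r l IH]; intros Hnd.
  - unfold sumR; simpl. apply outer_empty. intros x [_ []].
  - inversion Hnd as [|? ? Hr Hnd']. subst.
    assert (Hb' : bounded_set (fun i => I i /\ In (sg i) (r :: l))) by (apply (bounded_sub _ I); tauto).
    rewrite (outer_split _ _ (Hm r) Hb').
    unfold sumR; simpl. fold (sumR l (mu I sg)). rewrite <- IH by auto. unfold mu. f_equal.
    + apply outer_ext. intros x. simpl. intuition.
    + apply outer_ext. intros x. simpl. split.
      * intros [[HI [E|E]] N]; [exfalso; apply N; auto|]. auto.
      * intros [HI Hin]. split. split; auto. intros [_ E]. rewrite E in Hin. auto.
Qed.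

Lemma profile_in_Routes n L I part c sg : (3 <= n)%nat -> is_demand n L -> is_measurable_partition I L part ->
  is_equilibrium n I part c sg -> forall i, I i -> In (sg i) (Routes n L).
Proof.
  intros Hn Hd [Hp _] [[Hr _] _] i Hi. apply (route_in_Routes n L (part i)); auto.
Qed.

Lemma flow_decomp n L I part c sg a : (3 <= n)%nat -> is_demand n L -> bounded_set I ->
  is_measurable_partition I L part -> is_equilibrium n I part c sg ->
  flow I sg a = sumR (Ra n L a) (mu I sg).
Proof.
  intros Hn Hd Hb Hpart Heq. unfold flow.
  rewrite <- (outer_add_list I sg Hb) by (apply Heq || apply Ra_nodup).
  apply outer_ext. intros i. split.
  - intros [Hi Ha]. split; auto. apply in_Ra. split; auto. apply (profile_in_Routes n L I part c); auto.
  - intros [Hi Ha]. split; auto. apply in_Ra in Ha. tauto.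
Qed.

Lemma pair_mass n L I part c sg k : (3 <= n)%nat -> is_demand n L -> bounded_set I ->
  is_measurable_partition I L part -> is_equilibrium n I part c sg -> In k L ->
  lebesgue_outer (fun i => I i /\ part i = k) = mu I sg (Pr n k) + mu I sg (Qr n k).
Proof.
  intros Hn Hd Hb Hpart Heq Hk.
  assert (Hnd : NoDup [Pr n k; Qr n k]).
  { constructor. intros [E|[]]. apply (PQ_neq n L k); auto. constructor. auto. constructor. }
  replace (mu I sg (Pr n k) + mu I sg (Qr n k)) with (sumR [Pr n k; Qr n k] (mu I sg)) by (unfold sumR; simpl; lra).
  rewrite <- (outer_add_list I sg Hb) by (apply Heq || auto).
  apply outer_ext. intros i. destruct Heq as [[Hr _] _]. destruct Hpart as [Hpl _]. split.
  - intros [Hi <-]. split; auto. destruct (dem_k n L (part i) Hd (Hpl i Hi)) as [H1 [H2 H3]].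
    specialize (Hr i Hi). destruct (part i) as [o d] eqn:Ep. simpl in *.
    destruct (route_char n o d (sg i)); auto.
  - intros [Hi Hin]. split; auto. destruct (PQ_route n L k Hn Hd Hk) as [R1 R2].
    apply (route_pair_unique n (part i) k (sg i)); auto. simpl in Hin. destruct Hin as [E|[E|[]]]; rewrite <- E; auto.
Qed.

Open Scope R_scope.
Open Scope R_scope.

Definition ddf I s1 s2 r := mu I s1 r - mu I s2 r.

Lemma abs_bound z d : Rabs z <= d -> - d <= z <= d.
Proof. intros H. pose proof (Rle_abs z). pose proof (Rle_abs (- z)). rewrite Rabs_Ropp in H1. lra. Qed.

Lemma sum2 (l : list (list nat)) (dd : list nat -> R) d x : NoDup l -> (length l <= 2)%nat -> In x l ->
  (forall y, In y l -> Rabs (dd y) <= d) ->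
  (dd x = d -> 0 <= sumR l dd /\ (sumR l dd = 0 -> exists y, In y l /\ dd y = - d)) /\
  (dd x = - d -> sumR l dd <= 0 /\ (sumR l dd = 0 -> exists y, In y l /\ dd y = d)).
Proof.
  intros Hnd Hlen Hx Hb. unfold sumR.
  destruct l as [|u [|v [|w l]]]; [destruct Hx| | | simpl in Hlen; lia]; simpl.
  - destruct Hx as [<-|[]]. assert (B := abs_bound _ _ (Hb u (or_introl eq_refl))). split; intros E; split; try lra; intros; exists u; split; auto; lra.
  - assert (Bu := abs_bound _ _ (Hb u (or_introl eq_refl))).
    assert (Bv := abs_bound _ _ (Hb v (or_intror (or_introl eq_refl)))).
    destruct Hx as [<-|[<-|[]]]; split; intros E; split; try lra; intros S.
    + exists v. split; auto. lra.
    + exists v. split; auto. lra.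
    + exists u. split; auto. lra.
    + exists u. split; auto. lra.
Qed.

Lemma cost_diff (c : R -> nat * nat -> R -> R) i f g p :
  route_cost c i f p - route_cost c i g p = sumR (consecutive_arcs p) (fun b => c i b (f b) - c i b (g b)).
Proof. unfold route_cost, sumR. induction (consecutive_arcs p); simpl; [lra|]. rewrite <- IHl. lra. Qed.

Lemma phi_sign n I c i b x y : admissible_costs n I c -> I i -> cycle_arc n b -> 0 <= x -> 0 <= y ->
  (y <= x -> 0 <= c i b x - c i b y) /\ (c i b x - c i b y = 0 -> x = y).
Proof.
  intros Hc Hi Hb Hx Hy. destruct (Hc b Hb) as [H _]. destruct (H i Hi) as [_ [_ Hm]].
  split.
  - intros Hle. destruct (Req_dec x y) as [->|Hne]; [lra|]. assert (c i b y < c i b x) by (apply Hm; lra). lra.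
  - intros E. destruct (Rtotal_order x y) as [Hl|[He|Hl]]; auto.
    + assert (c i b x < c i b y) by (apply Hm; lra). lra.
    + assert (c i b y < c i b x) by (apply Hm; lra). lra.
Qed.

Lemma flow_nonneg I sg b : bounded_set I -> 0 <= flow I sg b.
Proof. intros Hb. apply outer_nonneg. apply (bounded_sub _ I); tauto. Qed.

Lemma dflow n L I part c s1 s2 b : (3 <= n)%nat -> is_demand n L -> bounded_set I ->
  is_measurable_partition I L part -> is_equilibrium n I part c s1 -> is_equilibrium n I part c s2 ->
  flow I s1 b - flow I s2 b = sumR (Ra n L b) (ddf I s1 s2).
Proof.
  intros. rewrite (flow_decomp n L I part c s1), (flow_decomp n L I part c s2) by auto.
  rewrite sumR_sub. reflexivity.
Qed.

Lemma Zplus_lem n L I part c s1 s2 d k rp rm :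
  (3 <= n)%nat -> is_demand n L -> at_most_two_routes n L -> bounded_set I ->
  is_measurable_partition I L part -> admissible_costs n I c ->
  is_equilibrium n I part c s1 -> is_equilibrium n I part c s2 ->
  (forall r, In r (Routes n L) -> Rabs (ddf I s1 s2 r) <= d) -> 0 < d ->
  In k L -> (rp = Pr n k \/ rp = Qr n k) -> (rm = Pr n k \/ rm = Qr n k) -> rp <> rm ->
  ddf I s1 s2 rp = d -> ddf I s1 s2 rm = - d ->
  (forall b, In b (consecutive_arcs rp) -> sumR (Ra n L b) (ddf I s1 s2) = 0 /\
       exists s, In s (Ra n L b) /\ ddf I s1 s2 s = - d) /\
  (forall b, In b (consecutive_arcs rm) -> sumR (Ra n L b) (ddf I s1 s2) = 0 /\
       exists s, In s (Ra n L b) /\ ddf I s1 s2 s = d).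
Proof.
  intros Hn Hd Htwo Hb Hpart Hc E1 E2 Hbound Hdpos Hk Hrp Hrm Hne Hdp Hdm.
  set (dd := ddf I s1 s2) in *.
  assert (Hdiff : forall b, flow I s1 b - flow I s2 b = sumR (Ra n L b) dd).
  { intros b. apply (dflow n L I part c); auto. }
  assert (Hu : exists i, I i /\ s1 i = rp /\ s2 i <> rp).
  { apply NNPP. intros Hno.
    assert (mu I s1 rp <= mu I s2 rp).
    { apply outer_mono. apply E1. apply (bounded_sub _ I); tauto.
      intros i [Hi Ei]. split; auto. apply NNPP. intros N. apply Hno. eauto. }
    unfold dd, ddf in Hdp. lra. }
  destruct Hu as [i [Hi [Ei1 Ei2]]].
  destruct E1 as [[R1 M1] Q1]. destruct E2 as [[R2 M2] Q2].
  destruct (PQ_route n L k Hn Hd Hk) as [PR QR].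
  assert (Hpk : part i = k).
  { apply (route_pair_unique n (part i) k (s1 i)). apply R1; auto. rewrite Ei1. destruct Hrp as [->| ->]; auto. }
  assert (Ei2' : s2 i = rm).
  { pose proof (R2 i Hi) as R. rewrite Hpk in R. destruct (dem_k n L k Hd Hk) as [H1 [H2 H3]].
    destruct k as [o d0]. simpl in *. destruct (route_char n o d0 (s2 i)) as [E|E]; auto;
    destruct Hrp as [->| ->], Hrm as [->| ->]; congruence. }
  pose proof (Q1 i Hi (s2 i) (R2 i Hi)) as C1. pose proof (Q2 i Hi (s1 i) (R1 i Hi)) as C2.
  set (phi := fun b => c i b (flow I s1 b) - c i b (flow I s2 b)).
  assert (Hineq : sumR (consecutive_arcs rp) phi <= sumR (consecutive_arcs rm) phi).
  { unfold phi. rewrite <- !cost_diff. rewrite <- Ei1, <- Ei2'. lra. }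
  assert (HrpR : In rp (Routes n L)) by (apply in_Routes; eauto).
  assert (HrmR : In rm (Routes n L)) by (apply in_Routes; eauto).
  assert (Hcyc : forall r b, In r (Routes n L) -> In b (consecutive_arcs r) -> cycle_arc n b).
  { intros r b Hr Hb'. apply (Routes_arc n L r); auto. }
  assert (Hsum : forall r b x, In r (Routes n L) -> In b (consecutive_arcs r) -> In x (Ra n L b) ->
     (dd x = d -> 0 <= sumR (Ra n L b) dd /\ (sumR (Ra n L b) dd = 0 -> exists y, In y (Ra n L b) /\ dd y = - d)) /\
     (dd x = - d -> sumR (Ra n L b) dd <= 0 /\ (sumR (Ra n L b) dd = 0 -> exists y, In y (Ra n L b) /\ dd y = d))).
  { intros r b x Hr Hb' Hx. apply sum2; auto. apply Ra_nodup. apply Ra_len; eauto.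
    intros y Hy. apply Hbound. apply in_Ra in Hy. tauto. }
  assert (Hphi : forall b, cycle_arc n b ->
     (flow I s2 b <= flow I s1 b -> 0 <= phi b) /\ (phi b = 0 -> flow I s1 b = flow I s2 b)).
  { intros b Hb'. apply (phi_sign n I c); auto; apply flow_nonneg; auto. }
  assert (Pp : forall b, In b (consecutive_arcs rp) -> 0 <= phi b).
  { intros b Hb'. apply Hphi. eauto.
    assert (0 <= sumR (Ra n L b) dd). { apply (Hsum rp b rp); auto. apply in_Ra; auto. }
    specialize (Hdiff b). lra. }
  assert (Pm : forall b, In b (consecutive_arcs rm) -> 0 <= - phi b).
  { intros b Hb'. assert (sumR (Ra n L b) dd <= 0). { apply (Hsum rm b rm); auto. apply in_Ra; auto. }
    assert (flow I s1 b <= flow I s2 b) by (specialize (Hdiff b); lra).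
    destruct (Req_dec (flow I s1 b) (flow I s2 b)) as [Eq|Neq].
    - unfold phi. rewrite Eq. lra.
    - destruct (Rle_lt_dec (phi b) 0) as [Hle|Hlt]; [lra|].
      exfalso. assert (Hcb : cycle_arc n b) by eauto.
      destruct (phi_sign n I c i b (flow I s2 b) (flow I s1 b) Hc Hi Hcb) as [Hs _]; try apply flow_nonneg; auto.
      assert (0 <= c i b (flow I s2 b) - c i b (flow I s1 b)) by (apply Hs; lra).
      destruct (phi_sign n I c i b (flow I s1 b) (flow I s2 b) Hc Hi Hcb) as [_ Hz]; try apply flow_nonneg; auto.
      unfold phi in Hlt. lra. }
  assert (S1 : 0 <= sumR (consecutive_arcs rp) phi) by (apply sumR_nonneg; auto).
  assert (S2 : 0 <= sumR (consecutive_arcs rm) (fun b => - phi b)) by (apply sumR_nonneg; auto).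
  rewrite sumR_opp in S2.
  assert (Z1 : forall b, In b (consecutive_arcs rp) -> phi b = 0).
  { apply sumR_zero; auto. lra. }
  assert (Z2 : forall b, In b (consecutive_arcs rm) -> - phi b = 0).
  { apply (sumR_zero _ (fun b => - phi b)); auto. rewrite sumR_opp. lra. }
  split.
  - intros b Hb'. assert (Hcb : cycle_arc n b) by eauto.
    assert (E0 : sumR (Ra n L b) dd = 0).
    { rewrite <- Hdiff. destruct (Hphi b Hcb) as [_ H]. rewrite H; auto. lra. }
    split; auto. apply (Hsum rp b rp); auto. apply in_Ra; auto.
  - intros b Hb'. assert (Hcb : cycle_arc n b) by eauto.
    assert (E0 : sumR (Ra n L b) dd = 0).
    { rewrite <- Hdiff. destruct (Hphi b Hcb) as [_ H]. rewrite H; auto. lra. specialize (Z2 b Hb'). lra. }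
    split; auto. apply (Hsum rm b rm); auto. apply in_Ra; auto.
Qed.

Open Scope R_scope.
Open Scope R_scope.

Lemma Zfull n L I part c s1 s2 d :
  (3 <= n)%nat -> is_demand n L -> at_most_two_routes n L -> bounded_set I ->
  is_measurable_partition I L part -> admissible_costs n I c ->
  is_equilibrium n I part c s1 -> is_equilibrium n I part c s2 ->
  (forall r, In r (Routes n L) -> Rabs (ddf I s1 s2 r) <= d) -> 0 < d ->
  (forall k, In k L -> ddf I s1 s2 (Qr n k) = - ddf I s1 s2 (Pr n k)) ->
  forall r b, In r (Routes n L) -> Rabs (ddf I s1 s2 r) = d -> In b (consecutive_arcs r) ->
  sumR (Ra n L b) (ddf I s1 s2) = 0 /\ exists s, In s (Routes n L) /\ In b (consecutive_arcs s) /\ ddf I s1 s2 s = - ddf I s1 s2 r.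
Proof.
  intros Hn Hd Htwo Hb Hpart Hc E1 E2 Hbound Hdpos Hp r b Hr Habs Hbr.
  set (dd := ddf I s1 s2) in *.
  destruct (proj1 (in_Routes n L r) Hr) as [k [Hk Hrk]].
  pose proof (PQ_neq n L k Hn Hd Hk) as Hne.
  pose proof (Hp k Hk) as HQ.
  assert (Hcase : dd r = d \/ dd r = - d).
  { unfold Rabs in Habs. destruct (Rcase_abs (dd r)); lra. }
  assert (Fin : forall s, In s (Ra n L b) -> dd s = - dd r ->
     exists s, In s (Routes n L) /\ In b (consecutive_arcs s) /\ dd s = - dd r).
  { intros s Hs Es. apply in_Ra in Hs. exists s. tauto. }
  destruct Hrk as [-> | ->]; destruct Hcase as [Hc1|Hc1].
  - pose proof (Zplus_lem n L I part c s1 s2 d k (Pr n k) (Qr n k) Hn Hd Htwo Hb Hpart Hc E1 E2 Hbound Hdpos Hk (or_introl eq_refl) (or_intror eq_refl) Hne ltac:(unfold dd in *; lra) ltac:(unfold dd in *; lra)) as [ZZ _].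
    destruct (ZZ b Hbr) as [S [s [Hs Es]]]. split; auto. apply (Fin s); auto. unfold dd in *; lra.
  - pose proof (Zplus_lem n L I part c s1 s2 d k (Qr n k) (Pr n k) Hn Hd Htwo Hb Hpart Hc E1 E2 Hbound Hdpos Hk (or_intror eq_refl) (or_introl eq_refl) (not_eq_sym Hne) ltac:(unfold dd in *; lra) ltac:(unfold dd in *; lra)) as [_ ZZ].
    destruct (ZZ b Hbr) as [S [s [Hs Es]]]. split; auto. apply (Fin s); auto. unfold dd in *; lra.
  - pose proof (Zplus_lem n L I part c s1 s2 d k (Qr n k) (Pr n k) Hn Hd Htwo Hb Hpart Hc E1 E2 Hbound Hdpos Hk (or_intror eq_refl) (or_introl eq_refl) (not_eq_sym Hne) ltac:(unfold dd in *; lra) ltac:(unfold dd in *; lra)) as [ZZ _].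
    destruct (ZZ b Hbr) as [S [s [Hs Es]]]. split; auto. apply (Fin s); auto. unfold dd in *; lra.
  - pose proof (Zplus_lem n L I part c s1 s2 d k (Pr n k) (Qr n k) Hn Hd Htwo Hb Hpart Hc E1 E2 Hbound Hdpos Hk (or_introl eq_refl) (or_intror eq_refl) Hne ltac:(unfold dd in *; lra) ltac:(unfold dd in *; lra)) as [_ ZZ].
    destruct (ZZ b Hbr) as [S [s [Hs Es]]]. split; auto. apply (Fin s); auto. unfold dd in *; lra.
Qed.

Lemma maxl {A} (l : list A) (g : A -> R) :
  0 <= fold_right Rmax 0 (map g l) /\ (forall x, In x l -> g x <= fold_right Rmax 0 (map g l)) /\
  (fold_right Rmax 0 (map g l) = 0 \/ exists x, In x l /\ g x = fold_right Rmax 0 (map g l)).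
Proof.
  induction l as [|a l [IH1 [IH2 IH3]]]; simpl.
  - split; [lra|]. split; [intros _ []|]. auto.
  - set (M := fold_right Rmax 0 (map g l)) in *.
    split. eapply Rle_trans; [apply IH1| apply Rmax_r].
    split. intros x [<-|Hx]. apply Rmax_l. eapply Rle_trans; [apply IH2; auto| apply Rmax_r].
    destruct (Rle_dec (g a) M) as [Hle|Hlt].
    + rewrite Rmax_right by auto. destruct IH3 as [|[x [Hx Ex]]]; auto. right. exists x. auto.
    + rewrite Rmax_left by lra. right. exists a. auto.
Qed.

Lemma sumR_all0 {A} (l : list A) f : (forall x, In x l -> f x = 0) -> sumR l f = 0.
Proof. induction l; intros H; unfold sumR in *; simpl; [lra|]. rewrite IHl, H; [lra|simpl; auto|intros; apply H; simpl; auto]. Qed.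

Theorem proposition1 (n : nat) (L : list (nat * nat)) :
  (3 <= n)%nat -> is_demand n L -> at_most_two_routes n L ->
  uniqueness_property n L.
Proof.
  intros Hn Hd Htwo I HI part Hpart c Hc s1 s2 E1 E2 a Ha.
  assert (Hb : bounded_set I) by apply HI.
  assert (Hdiff := dflow n L I part c s1 s2 a Hn Hd Hb Hpart E1 E2).
  set (dd := ddf I s1 s2) in *.
  assert (Hp : forall k, In k L -> dd (Qr n k) = - dd (Pr n k)).
  { intros k Hk. unfold dd, ddf.
    pose proof (pair_mass n L I part c s1 k Hn Hd Hb Hpart E1 Hk).
    pose proof (pair_mass n L I part c s2 k Hn Hd Hb Hpart E2 Hk). lra. }
  destruct (maxl (Routes n L) (fun r => Rabs (dd r))) as [M1 [M2 M3]].
  set (d := fold_right Rmax 0 (map (fun r => Rabs (dd r)) (Routes n L))) in *.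
  enough (sumR (Ra n L a) dd = 0) by lra.
  destruct (Req_dec d 0) as [Hd0|Hd0].
  - apply sumR_all0. intros x Hx. apply in_Ra in Hx. destruct Hx as [Hx _].
    specialize (M2 x Hx). simpl in M2. pose proof (Rabs_pos (dd x)).
    assert (Rabs (dd x) = 0) by lra. destruct (Req_dec (dd x) 0) as [|Hn0]; auto. exfalso. apply Rabs_no_R0 in Hn0. contradiction.
  - destruct M3 as [|[r0 [Hr0 Er0]]]; [contradiction|].
    assert (Hdpos : 0 < d) by lra.
    assert (HZ : HZ_prop n L dd d).
    { intros r b Hr Hrd Hbr. destruct (Zfull n L I part c s1 s2 d Hn Hd Htwo Hb Hpart Hc E1 E2) with (r := r) (b := b)
        as [_ H]; auto. }
    destruct (cover_all n L dd d Hn Hd Htwo Hdpos HZ Hp r0 Hr0 Er0 a Ha) as [r [Hr [Hrd Har]]].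
    destruct (Zfull n L I part c s1 s2 d Hn Hd Htwo Hb Hpart Hc E1 E2) with (r := r) (b := a) as [H _]; auto.
Qed.
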